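(* For $i=1,2$ let $\alpha_i\in[-1,1]$ and let $f_{\alpha_i}=h_{\alpha_i}+\overline{g_{\alpha_i}}\in S_H$ with $h_{\alpha_i}(z)+g_{\alpha_i}(z)=\dfrac{z(1-\alpha_i z)}{1-z^2}$. Suppose the dilatation of $f_{\alpha_1}$ is $\omega_1(z)=-z$ and the dilatation of $f_{\alpha_2}$ is $\omega_2(z)=z$. If $\alpha_1\ge\alpha_2$, then for every $0\le t\le1$ the map $f=tf_{\alpha_1}+(1-t)f_{\alpha_2}$ belongs to $S_H$ and maps $E$ onto a domain convex in the direction of the imaginary axis.
   Context: $E=\{z\in\mathbb{C}:|z|<1\}$. For a harmonic mapping $f=h+\overline{g}$ on $E$ with $h,g$ analytic, the dilatation is $\omega=g'/h'$; $f$ is locally univalent and sense-preserving iff $h'\ne0$ and $|\omega|<1$ in $E$. $S_H$ denotes the class of harmonic, univalent, sense-preserving mappings $f=h+\overline{g}$ of $E$ normalized by $f(0)=0$, $f_z(0)=1$. A domain $\Omega$ is convex in the direction of the imaginary axis if every line parallel to the imaginary axis has connected or empty intersection with $\Omega$. *)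

(* Defs.v *)
From Stdlib Require Import Reals.
Open Scope R_scope.

Definition Cpx : Type := (R * R)%type.
Definition Re (z : Cpx) : R := fst z.
Definition Im (z : Cpx) : R := snd z.
Definition RtoC (a : R) : Cpx := (a, 0).
Definition C0 : Cpx := (0, 0).
Definition C1 : Cpx := (1, 0).
Definition Cadd (z w : Cpx) : Cpx := (fst z + fst w, snd z + snd w).
Definition Copp (z : Cpx) : Cpx := (- fst z, - snd z).
Definition Csub (z w : Cpx) : Cpx := Cadd z (Copp w).
Definition Cmul (z w : Cpx) : Cpx :=
  (fst z * fst w - snd z * snd w, fst z * snd w + snd z * fst w).
Definition Cconj (z : Cpx) : Cpx := (fst z, - snd z).
Definition Cnorm (z : Cpx) : R := sqrt (fst z * fst z + snd z * snd z).
Definition Cinv (z : Cpx) : Cpx :=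
  let d := fst z * fst z + snd z * snd z in (fst z / d, - snd z / d).
Definition Cdiv (z w : Cpx) : Cpx := Cmul z (Cinv w).
Definition Cscal (a : R) (z : Cpx) : Cpx := (a * fst z, a * snd z).

Definition inE (z : Cpx) : Prop := Cnorm z < 1.

Definition is_cderiv (f : Cpx -> Cpx) (z l : Cpx) : Prop :=
  forall eps : R, 0 < eps -> exists delta : R, 0 < delta /\
    forall w : Cpx, 0 < Cnorm (Csub w z) < delta ->
      Cnorm (Csub (Cdiv (Csub (f w) (f z)) (Csub w z)) l) < eps.

Definition analytic_on_E (f : Cpx -> Cpx) : Prop :=
  forall z, inE z -> exists l, is_cderiv f z l.

Definition harm (h g : Cpx -> Cpx) : Cpx -> Cpx := fun z => Cadd (h z) (Cconj (g z)).

Definition in_SH (h g : Cpx -> Cpx) : Prop :=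
  analytic_on_E h /\ analytic_on_E g /\
  (forall z w, inE z -> inE w -> harm h g z = harm h g w -> z = w) /\
  (forall z a b, inE z -> is_cderiv h z a -> is_cderiv g z b ->
      a <> C0 /\ Cnorm (Cdiv b a) < 1) /\
  harm h g C0 = C0 /\
  is_cderiv h C0 C1.

Definition has_dilatation (h g : Cpx -> Cpx) (omega : Cpx -> Cpx) : Prop :=
  forall z a b, inE z -> is_cderiv h z a -> is_cderiv g z b ->
    a <> C0 /\ Cdiv b a = omega z.

(* A set D of the plane is convex in the direction of the imaginary axis:
   its intersection with every vertical line is connected (= an interval,
   i.e. contains the segment between any two of its points). *)
Definition convex_imag_dir (D : Cpx -> Prop) : Prop :=
  forall w1 w2 : Cpx, D w1 -> D w2 -> Re w1 = Re w2 ->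
    forall s : R, 0 <= s <= 1 -> D (Re w1, s * Im w1 + (1 - s) * Im w2).

Definition image_E (f : Cpx -> Cpx) : Cpx -> Prop := fun w => exists z, inE z /\ f z = w.

Definition shear_fun (alpha : R) (z : Cpx) : Cpx :=
  Cdiv (Cmul z (Csub C1 (Cmul (RtoC alpha) z))) (Csub C1 (Cmul z z)).

(* Main.v *)
From Stdlib Require Import Reals.
From Coquelicot Require Import Coquelicot.
Require Import Defs.
From Stdlib Require Import Lra Psatz Classical.
Open Scope R_scope.
Local Notation RtoC := Complex.RtoC.

Lemma Cadd_eq z w : Cadd z w = Cplus z w. Proof. reflexivity. Qed.
Lemma Cmul_eq z w : Cmul z w = Cmult z w. Proof. reflexivity. Qed.
Lemma Copp_eq z : Defs.Copp z = Complex.Copp z. Proof. reflexivity. Qed.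
Lemma Csub_eq z w : Csub z w = Cminus z w. Proof. reflexivity. Qed.
Lemma Cinv_eq z : Defs.Cinv z = Complex.Cinv z.
Proof. destruct z as [x y]; unfold Defs.Cinv, Complex.Cinv; simpl; f_equal; f_equal; ring. Qed.
Lemma Cdiv_eq z w : Defs.Cdiv z w = Complex.Cdiv z w.
Proof. unfold Defs.Cdiv, Complex.Cdiv. rewrite Cinv_eq. reflexivity. Qed.
Lemma Cnorm_eq z : Cnorm z = Cmod z.
Proof. destruct z as [x y]; unfold Cnorm, Cmod; simpl; f_equal; ring. Qed.
Lemma RtoC_eq a : Defs.RtoC a = Complex.RtoC a. Proof. reflexivity. Qed.
Lemma Cscal_eq a z : Cscal a z = Cmult (Complex.RtoC a) z.
Proof. destruct z as [x y]; unfold Cscal, Cmult; simpl; f_equal; ring. Qed.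
Lemma Cconj_eq z : Defs.Cconj z = Complex.Cconj z. Proof. reflexivity. Qed.
Lemma C0_eq : Defs.C0 = Complex.RtoC 0. Proof. reflexivity. Qed.
Lemma C1_eq : Defs.C1 = Complex.RtoC 1. Proof. reflexivity. Qed.
Ltac tocq_goal := repeat match goal with
  | |- context[Cadd ?a ?b] => rewrite (Cadd_eq a b)
  | |- context[Cmul ?a ?b] => rewrite (Cmul_eq a b)
  | |- context[Defs.Copp ?a] => rewrite (Copp_eq a)
  | |- context[Csub ?a ?b] => rewrite (Csub_eq a b)
  | |- context[Defs.Cdiv ?a ?b] => rewrite (Cdiv_eq a b)
  | |- context[Defs.Cinv ?a] => rewrite (Cinv_eq a)
  | |- context[Cnorm ?a] => rewrite (Cnorm_eq a)
  | |- context[Defs.RtoC ?a] => rewrite (RtoC_eq a)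
  | |- context[Cscal ?a ?b] => rewrite (Cscal_eq a b)
  | |- context[Defs.Cconj ?a] => rewrite (Cconj_eq a)
  | |- context[Defs.C0] => rewrite C0_eq
  | |- context[Defs.C1] => rewrite C1_eq
  end.
Ltac tocq_hyp := repeat match goal with
  | H : context[Cadd ?a ?b] |- _ => rewrite (Cadd_eq a b) in H
  | H : context[Cmul ?a ?b] |- _ => rewrite (Cmul_eq a b) in H
  | H : context[Defs.Copp ?a] |- _ => rewrite (Copp_eq a) in H
  | H : context[Csub ?a ?b] |- _ => rewrite (Csub_eq a b) in H
  | H : context[Defs.Cdiv ?a ?b] |- _ => rewrite (Cdiv_eq a b) in H
  | H : context[Defs.Cinv ?a] |- _ => rewrite (Cinv_eq a) in H
  | H : context[Cnorm ?a] |- _ => rewrite (Cnorm_eq a) in H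
  | H : context[Defs.RtoC ?a] |- _ => rewrite (RtoC_eq a) in H
  | H : context[Cscal ?a ?b] |- _ => rewrite (Cscal_eq a b) in H
  | H : context[Defs.Cconj ?a] |- _ => rewrite (Cconj_eq a) in H
  | H : context[Defs.C0] |- _ => rewrite C0_eq in H
  | H : context[Defs.C1] |- _ => rewrite C1_eq in H
  end.
Ltac tocq := tocq_goal; tocq_hyp.

Lemma dq_id (a b w z l : C) : Cminus w z <> Complex.RtoC 0 ->
  Cminus (Complex.Cdiv (Cminus a b) (Cminus w z)) l = Complex.Cdiv (Cminus (Cminus a b) (Cmult (Cminus w z) l)) (Cminus w z).
Proof. intros. field. auto. Qed.

Lemma cd2d f z l : is_cderiv f z l -> @is_derive C_AbsRing (AbsRing_NormedModule C_AbsRing) f z l.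
Proof.
  intros H. split. apply is_linear_scal_l.
  intros x Hx. apply (@is_filter_lim_locally_unique C_AbsRing (AbsRing_NormedModule C_AbsRing)) in Hx. subst x.
  intros eps. destruct (H eps (cond_pos eps)) as [d [Hd Hd']].
  exists (mkposreal _ Hd). intros y Hy.
  change (Cmod (Cminus y z) < d) in Hy.
  change (Cmod (Cminus (Cminus (f y) (f z)) (Cmult (Cminus y z) l)) <= eps * Cmod (Cminus y z)).
  destruct (classic (y = z)) as [->|Hne].
  - replace (Cminus (Cminus (f z) (f z)) (Cmult (Cminus z z) l)) with (Complex.RtoC 0) by (apply injective_projections; simpl; ring).
    rewrite Cmod_0. pose proof (Cmod_ge_0 (Cminus z z)). pose proof (cond_pos eps). nra.
  - assert (Hn : Cminus y z <> Complex.RtoC 0).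
    { intro E. apply Hne. apply injective_projections; injection E; simpl; lra. }
    specialize (Hd' y). tocq.
    assert (0 < Cmod (Cminus y z)) by (apply Cmod_gt_0; auto).
    specialize (Hd' (conj H0 Hy)).
    rewrite dq_id in Hd' by auto.
    rewrite Cmod_div in Hd' by auto.
    apply Rlt_le. apply (Rmult_lt_compat_r (Cmod (Cminus y z))) in Hd'; auto.
    unfold Rdiv in Hd'. rewrite Rmult_assoc, Rinv_l in Hd' by lra. lra.
Qed.

Lemma d2cd f z l : @is_derive C_AbsRing (AbsRing_NormedModule C_AbsRing) f z l -> is_cderiv f z l.
Proof.
  intros [_ H] eps Heps.
  assert (He2 : 0 < eps/2) by lra.
  destruct (H z (fun P HP => HP) (mkposreal _ He2)) as [d Hd].
  exists d. split. apply cond_pos. intros w [Hw1 Hw2].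
  specialize (Hd w).
  change (Cmod (Cminus w z) < d -> Cmod (Cminus (Cminus (f w) (f z)) (Cmult (Cminus w z) l)) <= eps/2 * Cmod (Cminus w z)) in Hd.
  tocq.
  specialize (Hd Hw2).
  assert (Hn : Cminus w z <> Complex.RtoC 0) by (apply Cmod_gt_0; auto).
  rewrite dq_id by auto.
  rewrite Cmod_div by auto.
  apply (Rmult_lt_reg_r (Cmod (Cminus w z))); auto.
  unfold Rdiv. rewrite Rmult_assoc, Rinv_l; [nra|lra].
Qed.

Lemma cd_unique f z l1 l2 : is_cderiv f z l1 -> is_cderiv f z l2 -> l1 = l2.
Proof.
  intros H1 H2. apply NNPP. intro Hne.
  assert (Hn : Cminus l1 l2 <> RtoC 0).
  { intro E. apply Hne. apply injective_projections; injection E; simpl; lra. }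
  apply Cmod_gt_0 in Hn.
  assert (He : 0 < Cmod (Cminus l1 l2) / 2) by lra.
  destruct (H1 _ He) as [d1 [Hd1 K1]]. destruct (H2 _ He) as [d2 [Hd2 K2]].
  set (r := Rmin d1 d2 / 2).
  assert (Hr : 0 < r) by (unfold r; apply Rmin_case; lra).
  assert (Hr1 : r < d1) by (unfold r; pose proof (Rmin_l d1 d2); lra).
  assert (Hr2 : r < d2) by (unfold r; pose proof (Rmin_r d1 d2); lra).
  set (w := Cplus z (RtoC r)).
  assert (Hw : Cnorm (Csub w z) = r).
  { rewrite Cnorm_eq. unfold w. replace (Csub (Cplus z (RtoC r)) z) with (RtoC r).
    rewrite Cmod_R. apply Rabs_right. lra. apply injective_projections; simpl; ring. }
  specialize (K1 w). specialize (K2 w). rewrite Hw in K1, K2.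
  specialize (K1 (conj Hr Hr1)). specialize (K2 (conj Hr Hr2)).
  revert K1 K2. set (Q := Cdiv (Csub (f w) (f z)) (Csub w z)). tocq. intros K1 K2.
  assert (E : Cminus l1 l2 = Cplus (Cminus Q l2) (Complex.Copp (Cminus Q l1))).
  { apply injective_projections; simpl; ring. }
  pose proof (Cmod_triangle (Cminus Q l2) (Complex.Copp (Cminus Q l1))). rewrite Cmod_opp, <- E in H. change (Csub Q l2) with (Cminus Q l2) in K2. lra.
Qed.

Notation isd f z l := (@is_derive C_AbsRing (AbsRing_NormedModule C_AbsRing) f z l).

Ltac cfield := change Cpx with C in *; cbv beta; repeat progress rewrite ?RtoC_mult, ?RtoC_plus, ?RtoC_minus, ?RtoC_opp; match goal with |- @eq _ ?a ?b => change (@eq C a b); field; cbv beta end.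
Ltac cring := cbv beta; apply injective_projections; simpl; ring.

Lemma isd_unique f z l1 l2 : isd f z l1 -> isd f z l2 -> l1 = l2.
Proof. intros H1 H2. apply d2cd in H1. apply d2cd in H2. eapply cd_unique; eauto. Qed.

Lemma isd_l f z l l' : isd f z l -> l = l' -> isd f z l'.
Proof. intros H ->; exact H. Qed.

Lemma isd_plus f g z a b : isd f z a -> isd g z b -> isd (fun w => Cplus (f w) (g w)) z (Cplus a b).
Proof. intros Ha Hb. exact (is_derive_plus f g z a b Ha Hb). Qed.

Lemma isd_minus f g z a b : isd f z a -> isd g z b -> isd (fun w => Cminus (f w) (g w)) z (Cminus a b).
Proof. intros Ha Hb. exact (is_derive_minus f g z a b Ha Hb). Qed.

Lemma isd_mult f g z a b : isd f z a -> isd g z b ->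
  isd (fun w => Cmult (f w) (g w)) z (Cplus (Cmult a (g z)) (Cmult (f z) b)).
Proof. intros Ha Hb. exact (is_derive_mult f g z a b Ha Hb Cmult_comm). Qed.

Lemma isd_const (c z : C) : isd (fun _ => c) z (RtoC 0).
Proof. exact (@is_derive_const C_AbsRing (AbsRing_NormedModule C_AbsRing) c z). Qed.

Lemma isd_id (z : C) : isd (fun w => w) z (RtoC 1).
Proof. exact (is_derive_id z). Qed.

Lemma isd_scal f z a (t : R) : isd f z a -> isd (fun w => Cscal t (f w)) z (Cmult (RtoC t) a).
Proof.
  intros Ha. eapply is_derive_ext. intro w. symmetry. apply Cscal_eq.
  eapply isd_l. apply isd_mult. apply isd_const. exact Ha. cring.
Qed.

Lemma isd_lin f g z a b t s : isd f z a -> isd g z b ->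
  isd (fun w => Cadd (Cscal t (f w)) (Cscal s (g w))) z (Cplus (Cmult (RtoC t) a) (Cmult (RtoC s) b)).
Proof. intros Ha Hb. apply (isd_plus (fun w => Cscal t (f w)) (fun w => Cscal s (g w))); apply isd_scal; auto. Qed.

Lemma inE_mod z : inE z <-> Cmod z < 1.
Proof. unfold inE. rewrite Cnorm_eq. tauto. Qed.

Lemma isd_ext_E f g z l : inE z -> (forall w, inE w -> f w = g w) -> isd f z l -> isd g z l.
Proof.
  intros Hz Hfg. apply is_derive_ext_loc.
  rewrite inE_mod in Hz.
  assert (He : 0 < 1 - Cmod z) by lra.
  exists (mkposreal _ He). intros y Hy. apply Hfg. rewrite inE_mod.
  change (Cmod (Cminus y z) < 1 - Cmod z) in Hy.
  replace y with (Cplus z (Cminus y z)) by cring.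
  eapply Rle_lt_trans. apply Cmod_triangle. lra.
Qed.

Lemma one_minus_nz z : Cmod z < 1 -> Cminus (RtoC 1) z <> RtoC 0.
Proof. intros H E. assert (z = RtoC 1). { apply injective_projections; injection E; simpl; lra. }
  subst. rewrite Cmod_1 in H. lra. Qed.
Lemma one_plus_nz z : Cmod z < 1 -> Cplus (RtoC 1) z <> RtoC 0.
Proof. intros H E. assert (z = Complex.Copp (RtoC 1)). { apply injective_projections; injection E; simpl; lra. }
  subst. rewrite Cmod_opp, Cmod_1 in H. lra. Qed.

Definition qa (al : R) (z : C) : C := Cplus (Cminus (RtoC 1) (Cmult (RtoC (2*al)) z)) (Cmult z z).

Lemma deriv_shear_gen (al : R) (h1 g1 om : Cpx -> Cpx) z a b :
  (forall z, inE z -> Cadd (h1 z) (g1 z) = shear_fun al z) ->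
  has_dilatation h1 g1 om -> inE z -> is_cderiv h1 z a -> is_cderiv g1 z b ->
  a <> RtoC 0 /\ b = Cmult (om z) a /\
  Cmult a (Cplus (RtoC 1) (om z)) =
    Complex.Cdiv (qa al z) (Cmult (Cminus (RtoC 1) (Cmult z z)) (Cminus (RtoC 1) (Cmult z z))).
Proof.
  intros Hsum Hdil Hz Ha Hb.
  destruct (Hdil z a b Hz Ha Hb) as [Ha0 Hba]. tocq.
  pose proof Hz as Hz'. rewrite inE_mod in Hz'.
  pose proof (one_minus_nz z Hz'). pose proof (one_plus_nz z Hz').
  assert (HD : Cminus (RtoC 1) (Cmult z z) <> RtoC 0).
  { replace (Cminus (RtoC 1) (Cmult z z)) with (Cmult (Cminus (RtoC 1) z) (Cplus (RtoC 1) z)) by cring.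
    apply Cmult_neq_0; auto. }
  assert (Hb' : b = Cmult (om z) a).
  { rewrite <- Hba. cfield. auto. }
  split; [auto|split;[auto|]].
  apply cd2d in Ha. apply cd2d in Hb.
  pose proof (isd_plus _ _ _ _ _ Ha Hb) as HS.
  pose proof (isd_mult _ _ _ _ _ HS (isd_minus _ _ _ _ _ (isd_const (RtoC 1) z) (isd_mult _ _ _ _ _ (isd_id z) (isd_id z)))) as HP.
  simpl in HP.
  set (N := fun w : C => Cmult w (Cminus (RtoC 1) (Cmult (RtoC al) w))).
  assert (HN1 : isd N z (Cminus (RtoC 1) (Cmult (RtoC (2*al)) z))).
  { eapply isd_l. apply isd_mult. apply isd_id. apply isd_minus. apply isd_const.
    apply isd_mult. apply isd_const. apply isd_id.
    apply injective_projections; simpl; ring. }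
  assert (HN2 : isd N z (Cplus (Cmult (Cplus a b) (Cminus (RtoC 1) (Cmult z z)))
         (Cmult (Cplus (h1 z) (g1 z)) (Cminus (RtoC 0) (Cplus (Cmult (RtoC 1) z) (Cmult z (RtoC 1))))))).
  { eapply isd_ext_E. exact Hz. 2: exact HP.
    intros w Hw. simpl. specialize (Hsum w Hw). unfold shear_fun in Hsum. tocq. rewrite Hsum.
    unfold N. rewrite inE_mod in Hw. pose proof (one_minus_nz w Hw). pose proof (one_plus_nz w Hw).
    cfield.
    replace (Cminus (RtoC 1) (Cmult w w)) with (Cmult (Cminus (RtoC 1) w) (Cplus (RtoC 1) w)) by cring.
    apply Cmult_neq_0; auto. }
  pose proof (isd_unique _ _ _ _ HN1 HN2) as E.
  specialize (Hsum z Hz). unfold shear_fun in Hsum. tocq. rewrite Hsum in E.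
  rewrite Hb' in E.
  match type of E with ?L = Cplus ?P ?M => assert (E2 : P = Cminus L M) by (rewrite E; cring) end.
  transitivity (Complex.Cdiv (Cmult (Cplus a (Cmult (om z) a)) (Cminus (RtoC 1) (Cmult z z))) (Cminus (RtoC 1) (Cmult z z))).
  cfield. auto.
  rewrite E2. unfold qa. cfield. auto.
Qed.

Definition qr (al x y : R) := 1 - 2*al*x + x*x - y*y.
Definition qi (al x y : R) := -2*al*y + 2*x*y.
Definition Qf (a1 a2 x y : R) := qr a1 x y * qr a2 x y + qi a1 x y * qi a2 x y + 4*(a1-a2)*(y*y).

Lemma Qf_nonneg a1 a2 x y : -1 <= a2 -> a2 <= a1 -> a1 <= 1 -> 0 <= Qf a1 a2 x y.
Proof.
  intros H1 H2 H3.
  assert (Hd : forall a, 0 <= Qf a a x y) by (intro a; unfold Qf; nra).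
  assert (Hm : Qf 1 (-1) x y = (1 - x*x - y*y)^2 + 4*(y*y)) by (unfold Qf, qr, qi; ring).
  assert (H4 : 2 * Qf 1 a2 x y = (1+a2) * Qf 1 1 x y + (1-a2) * Qf 1 (-1) x y) by (unfold Qf, qr, qi; ring).
  assert (H5 : (1-a2) * Qf a1 a2 x y = (a1-a2) * Qf 1 a2 x y + (1-a1) * Qf a2 a2 x y) by (unfold Qf, qr, qi; ring).
  assert (H6 : 0 <= Qf 1 a2 x y).
  { pose proof (Hd 1). assert (0 <= Qf 1 (-1) x y) by (rewrite Hm; pose proof (pow2_ge_0 (1-x*x-y*y)); pose proof (Rle_0_sqr y); unfold Rsqr in *; lra).
    assert (0 <= (1+a2) * Qf 1 1 x y) by (apply Rmult_le_pos; lra).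
    assert (0 <= (1-a2) * Qf 1 (-1) x y) by (apply Rmult_le_pos; lra). lra. }
  destruct (Req_dec a2 1) as [E|E].
  - subst. assert (a1 = 1) by lra. subst. apply Hd.
  - pose proof (Hd a2). assert (0 < 1 - a2) by lra.
    assert (0 <= (a1-a2) * Qf 1 a2 x y) by (apply Rmult_le_pos; lra).
    assert (0 <= (1-a1) * Qf a2 a2 x y) by (apply Rmult_le_pos; lra).
    assert (0 <= (1-a2) * Qf a1 a2 x y) by lra.
    apply (Rmult_le_reg_l (1-a2)); lra.
Qed.

Lemma ReAB_id (t a1 a2 x y : R) :
  let A := Cmult (RtoC t) (Cmult (qr a1 x y, qi a1 x y) (Cplus (RtoC 1) (x,y))) in
  let B := Cmult (RtoC (1-t)) (Cmult (qr a2 x y, qi a2 x y) (Cminus (RtoC 1) (x,y))) in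
  fst A * fst B + snd A * snd B = t*(1-t)*(1 - x*x - y*y) * Qf a1 a2 x y.
Proof. simpl. unfold Qf, qr, qi. ring. Qed.

Lemma mod_lt1 x y : Cmod (x,y) < 1 -> x*x + y*y < 1.
Proof.
  unfold Cmod; cbn [fst snd]. intros H. destruct (Rlt_or_le (x*x+y*y) 1) as [h|h]; auto.
  exfalso. assert (1 <= sqrt (x ^ 2 + y ^ 2)). { rewrite <- sqrt_1. apply sqrt_le_1_alt. nra. } lra.
Qed.

Lemma qa_eq al x y : qa al (x,y) = (qr al x y, qi al x y).
Proof. unfold qa, qr, qi. apply injective_projections; simpl; ring. Qed.

Lemma qa_nz al z : -1 <= al <= 1 -> Cmod z < 1 -> qa al z <> RtoC 0.
Proof.
  destruct z as [x y]. intros Hal Hz E. apply mod_lt1 in Hz. rewrite qa_eq in E.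
  injection E as E1 E2. unfold qr in E1. unfold qi in E2.
  assert (H : y * (x - al) = 0) by nra. apply Rmult_integral in H.
  destruct H as [-> | H].
  { assert (E3 : (x-al)*(x-al) = al*al - 1) by nra.
    assert (0 <= (1-al)*(1+al)) by (apply Rmult_le_pos; lra).
    assert ((x-al)*(x-al) = 0) by nra.
    assert (x - al = 0) by (apply Rmult_integral in H0; tauto). nra. }
  assert (x = al) by lra. subst. nra.
Qed.

Lemma Cmod_le_sq (u v : C) : fst u * fst u + snd u * snd u <= fst v * fst v + snd v * snd v -> Cmod u <= Cmod v.
Proof. intros H. unfold Cmod. apply sqrt_le_1_alt. simpl. lra. Qed.

Lemma AB_bound (A B : C) : 0 <= fst A * fst B + snd A * snd B -> (A <> RtoC 0 \/ B <> RtoC 0) ->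
  Cplus A B <> RtoC 0 /\ Cmod (Cminus B A) <= Cmod (Cplus A B).
Proof.
  destruct A as [a1 a2], B as [b1 b2]; simpl. intros H Hnz. split.
  - intro E. injection E as E1 E2.
    assert (b1 = - a1) by lra. assert (b2 = - a2) by lra. subst.
    assert (a1 = 0) by nra. assert (a2 = 0) by nra. subst.
    destruct Hnz as [h|h]; apply h; apply injective_projections; simpl; lra.
  - apply Cmod_le_sq. simpl. nra.
Qed.

Lemma RtoC_nz t : t <> 0 -> RtoC t <> RtoC 0.
Proof. intros H E. apply H. injection E. auto. Qed.

Lemma sense_comb al1 al2 t z a1 a2 :
  -1 <= al2 -> al2 <= al1 -> al1 <= 1 -> 0 <= t <= 1 -> Cmod z < 1 ->
  Cmult a1 (Cminus (RtoC 1) z) = Complex.Cdiv (qa al1 z) (Cmult (Cminus (RtoC 1) (Cmult z z)) (Cminus (RtoC 1) (Cmult z z))) ->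
  Cmult a2 (Cplus (RtoC 1) z) = Complex.Cdiv (qa al2 z) (Cmult (Cminus (RtoC 1) (Cmult z z)) (Cminus (RtoC 1) (Cmult z z))) ->
  Cplus (Cmult (RtoC t) a1) (Cmult (RtoC (1-t)) a2) <> RtoC 0 /\
  Cmod (Complex.Cdiv (Cplus (Cmult (RtoC t) (Cmult (Complex.Copp z) a1)) (Cmult (RtoC (1-t)) (Cmult z a2)))
                     (Cplus (Cmult (RtoC t) a1) (Cmult (RtoC (1-t)) a2))) < 1.
Proof.
  intros H1 H2 H3 Ht Hz E1 E2.
  pose proof (one_minus_nz z Hz) as Hm. pose proof (one_plus_nz z Hz) as Hp.
  assert (HD : Cminus (RtoC 1) (Cmult z z) <> RtoC 0).
  { replace (Cminus (RtoC 1) (Cmult z z)) with (Cmult (Cminus (RtoC 1) z) (Cplus (RtoC 1) z)) by cring.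
    apply Cmult_neq_0; auto. }
  set (D := Cminus (RtoC 1) (Cmult z z)) in *.
  assert (Ea1 : a1 = Complex.Cdiv (qa al1 z) (Cmult (Cminus (RtoC 1) z) (Cmult D D))).
  { transitivity (Complex.Cdiv (Cmult a1 (Cminus (RtoC 1) z)) (Cminus (RtoC 1) z)). cfield. auto.
    rewrite E1. cfield. auto. }
  assert (Ea2 : a2 = Complex.Cdiv (qa al2 z) (Cmult (Cplus (RtoC 1) z) (Cmult D D))).
  { transitivity (Complex.Cdiv (Cmult a2 (Cplus (RtoC 1) z)) (Cplus (RtoC 1) z)). cfield. auto.
    rewrite E2. cfield. auto. }
  set (A := Cmult (RtoC t) (Cmult (qa al1 z) (Cplus (RtoC 1) z))).
  set (B := Cmult (RtoC (1-t)) (Cmult (qa al2 z) (Cminus (RtoC 1) z))).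
  set (M := Cmult (Cmult (Cminus (RtoC 1) z) (Cplus (RtoC 1) z)) (Cmult D D)).
  assert (HM : M <> RtoC 0) by (unfold M; repeat apply Cmult_neq_0; auto).
  assert (Ea : Cplus (Cmult (RtoC t) a1) (Cmult (RtoC (1-t)) a2) = Complex.Cdiv (Cplus A B) M).
  { rewrite Ea1, Ea2. unfold A, B, M. cfield. auto. }
  assert (Eb : Cplus (Cmult (RtoC t) (Cmult (Complex.Copp z) a1)) (Cmult (RtoC (1-t)) (Cmult z a2)) = Complex.Cdiv (Cmult z (Cminus B A)) M).
  { rewrite Ea1, Ea2. unfold A, B, M. cfield. auto. }
  rewrite Ea, Eb.
  assert (Hre : 0 <= fst A * fst B + snd A * snd B).
  { destruct z as [x y]. unfold A, B. rewrite !qa_eq. rewrite ReAB_id.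
    apply mod_lt1 in Hz.
    pose proof (Qf_nonneg al1 al2 x y H1 H2 H3).
    apply Rmult_le_pos; [|auto]. apply Rmult_le_pos; [|lra]. apply Rmult_le_pos; lra. }
  assert (Hnz : A <> RtoC 0 \/ B <> RtoC 0).
  { destruct (Req_dec t 0) as [->|Ht0].
    - right. unfold B. apply Cmult_neq_0. apply RtoC_nz. lra. apply Cmult_neq_0; auto.
      apply qa_nz; auto. lra.
    - left. unfold A. apply Cmult_neq_0. apply RtoC_nz. auto. apply Cmult_neq_0; auto.
      apply qa_nz; auto. lra. }
  destruct (AB_bound A B Hre Hnz) as [HAB HBA].
  split.
  - intro E. apply HAB. transitivity (Cmult (Complex.Cdiv (Cplus A B) M) M). cfield. auto.
    rewrite E. cring.
  - replace (Complex.Cdiv (Complex.Cdiv (Cmult z (Cminus B A)) M) (Complex.Cdiv (Cplus A B) M))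
      with (Cmult z (Complex.Cdiv (Cminus B A) (Cplus A B))) by (cfield; auto).
    rewrite Cmod_mult, Cmod_div by auto.
    apply Cmod_gt_0 in HAB.
    assert (Cmod (Cminus B A) / Cmod (Cplus A B) <= 1).
    { apply (Rmult_le_reg_r (Cmod (Cplus A B))); auto. unfold Rdiv. rewrite Rmult_assoc, Rinv_l; lra. }
    pose proof (Cmod_ge_0 z). pose proof (Cmod_ge_0 (Cminus B A)).
    assert (0 <= Cmod (Cminus B A) / Cmod (Cplus A B)) by (apply Rdiv_le_0_compat; lra).
    nra.
Qed.

Definition Sf (be K x : R) := sqrt (K*K + 4*(1-be*be)/(1+x*x)).
Definition af (be K x : R) := if Rlt_dec be 1 then (K + Sf be K x)/(2*(1-be)) else 2*(1+be)/(1+x*x)/(Sf be K x - K).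
Definition zet (be K x : R) : C := (af be K x, af be K x * x).
Definition gam (be K x : R) : C := Complex.Cdiv (Cminus (zet be K x) (RtoC 1)) (Cplus (zet be K x) (RtoC 1)).
Definition psi (be K x : R) := x * Sf be K x / 4.
Definition good (be K : R) := (be = -1 -> 0 < K) /\ (be = 1 -> K < 0).

Lemma x2p1 x : 0 < 1 + x*x.
Proof. nra. Qed.

Lemma Sf_sq be K x : -1 <= be <= 1 -> 0 <= Sf be K x /\ Sf be K x * Sf be K x = K*K + 4*(1-be*be)/(1+x*x).
Proof.
  intros Hb. unfold Sf. split. apply sqrt_pos. apply sqrt_sqrt.
  pose proof (x2p1 x). assert (0 <= 1 - be*be) by nra.
  assert (0 <= 4*(1-be*be)/(1+x*x)) by (apply Rdiv_le_0_compat; lra). nra.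
Qed.

Lemma af_prop be K x : -1 <= be <= 1 -> good be K ->
  0 < af be K x /\ (1-be)*af be K x - (1+be)/(1+x*x)/af be K x = K /\
  (1-be)*af be K x + (1+be)/(1+x*x)/af be K x = Sf be K x.
Proof.
  intros Hb [G1 G2]. pose proof (x2p1 x) as Hx.
  destruct (Sf_sq be K x Hb) as [HS0 HS2].
  set (S := Sf be K x) in *. set (p := /(1+x*x)).
  assert (Hp : 0 < p) by (apply Rinv_0_lt_compat; lra).
  assert (Hp' : 4*(1-be*be)/(1+x*x) = 4*(1-be*be)*p) by (unfold p; field; lra).
  rewrite Hp' in HS2.
  replace ((1+be)/(1+x*x)) with ((1+be)*p) by (unfold p; field; lra).
  unfold af. fold S. destruct (Rlt_dec be 1) as [Hlt|Hge].
  - assert (HKS : 0 < K + S).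
    { destruct (Req_dec be (-1)) as [E|E].
      - subst. specialize (G1 eq_refl). assert (S*S = K*K) by nra. nra.
      - assert (0 < 1 - be*be) by nra. assert (0 < (1-be*be)*p) by nra. nra. }
    set (a := (K+S)/(2*(1-be))).
    assert (Ha : 0 < a) by (unfold a; apply Rdiv_lt_0_compat; lra).
    assert (E : (1+be)*p = a*(S-K)/2).
    { unfold a. replace ((K+S)/(2*(1-be))*(S-K)/2) with ((S*S - K*K)/(4*(1-be))) by (field; lra).
      rewrite HS2. field. lra. }
    assert (E2 : (1+be)*p/a = (S-K)/2) by (rewrite E; field; lra).
    rewrite E2. split; auto. unfold a. split; field; lra.
  - assert (be = 1) by lra. subst. specialize (G2 eq_refl).
    assert (HSK : S = -K) by nra.
    assert (Ha : 0 < 2*(1+1)*p/(S-K)) by (apply Rdiv_lt_0_compat; lra).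
    unfold p in *. split. apply (Rlt_le_trans _ _ _ Ha); right; field; lra. rewrite HSK. split; field; lra.
Qed.

Lemma af_unique be K x A : -1 <= be <= 1 -> 0 < A -> (1-be)*A - (1+be)/(1+x*x)/A = K ->
  good be K /\ A = af be K x.
Proof.
  intros Hb HA HK. pose proof (x2p1 x) as Hx.
  set (p := /(1+x*x)).
  assert (Hp : 0 < p) by (apply Rinv_0_lt_compat; lra).
  replace ((1+be)/(1+x*x)) with ((1+be)*p) in HK by (unfold p; field; lra).
  assert (G : good be K).
  { split; intro E; subst.
    - replace ((1 - -1)*A - (1 + -1)*p/A) with (2*A) by (field; lra). lra.
    - replace ((1 - 1)*A - (1 + 1)*p/A) with (-(2*p/A)) by (field; lra).
      assert (0 < 2*p/A) by (apply Rdiv_lt_0_compat; lra). lra. }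
  split; auto.
  destruct (af_prop be K x Hb G) as [Ha [Hk _]].
  set (a := af be K x) in *.
  replace ((1+be)/(1+x*x)) with ((1+be)*p) in Hk by (unfold p; field; lra).
  assert (E : (A - a) * ((1-be) + (1+be)*p/(a*A)) = 0).
  { replace ((A - a) * ((1-be) + (1+be)*p/(a*A))) with (((1-be)*A - (1+be)*p/A) - ((1-be)*a - (1+be)*p/a)) by (field; lra).
    lra. }
  assert (0 < (1-be) + (1+be)*p/(a*A)).
  { destruct (Req_dec be 1) as [->|E1].
    - assert (0 < (1+1)*p/(a*A)) by (apply Rdiv_lt_0_compat; nra). lra.
    - assert (0 <= (1+be)*p/(a*A)) by (apply Rdiv_le_0_compat; nra). lra. }
  apply Rmult_integral in E. destruct E; lra.
Qed.

Definition Jf (be : R) (z : C) : C :=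
  Cplus (Complex.Cdiv (Cminus (Cmult (RtoC (1-be)) z) (Complex.Cdiv (RtoC (1+be)) z)) (RtoC 4)) (Complex.Cdiv (RtoC be) (RtoC 2)).

Lemma shear_J be zt : zt <> RtoC 0 -> Cplus zt (RtoC 1) <> RtoC 0 ->
  shear_fun be (Complex.Cdiv (Cminus zt (RtoC 1)) (Cplus zt (RtoC 1))) = Jf be zt.
Proof.
  intros H0 H1. unfold shear_fun, Jf. tocq. cfield.
  split; auto. split; auto.
  replace (Cminus (Cmult (Cplus zt (RtoC 1)) (Cplus zt (RtoC 1))) (Cmult (Cminus zt (RtoC 1)) (Cminus zt (RtoC 1))))
    with (Cmult (RtoC 4) zt) by cring.
  apply Cmult_neq_0; auto. apply RtoC_nz. lra.
Qed.

Lemma J_comp be a x : 0 < a ->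
  Jf be (a, a*x) = (((1-be)*a - (1+be)/(1+x*x)/a)/4 + be/2, x*((1-be)*a + (1+be)/(1+x*x)/a)/4).
Proof.
  intros Ha. pose proof (x2p1 x). unfold Jf, Complex.Cdiv, Complex.Cinv, Cminus, Cplus, Cmult, Complex.Copp, RtoC.
  apply injective_projections; simpl; field; nra.
Qed.

Lemma Cmod_lt_sq (u v : C) : fst u * fst u + snd u * snd u < fst v * fst v + snd v * snd v -> Cmod u < Cmod v.
Proof. intros H. unfold Cmod. apply sqrt_lt_1_alt. split. nra. simpl. lra. Qed.

Lemma gam_props be K x : -1 <= be <= 1 -> good be K ->
  Cmod (gam be K x) < 1 /\ shear_fun be (gam be K x) = ((K + 2*be)/4, psi be K x).
Proof.
  intros Hb G. destruct (af_prop be K x Hb G) as [Ha [E1 E2]].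
  unfold gam, zet. set (a := af be K x) in *.
  assert (Hz0 : ((a, a*x) : C) <> RtoC 0) by (intro E; injection E; lra).
  assert (Hz1 : Cplus (a, a*x) (RtoC 1) <> RtoC 0) by (intro E; injection E; simpl; lra).
  split.
  - rewrite Cmod_div by auto.
    assert (Cmod (Cminus (a, a*x) (RtoC 1)) < Cmod (Cplus (a, a*x) (RtoC 1))).
    { apply Cmod_lt_sq. simpl. nra. }
    apply Cmod_gt_0 in Hz1. apply (Rmult_lt_reg_r (Cmod (Cplus (a, a * x) (RtoC 1)))); auto.
    unfold Rdiv. rewrite Rmult_assoc, Rinv_l; lra.
  - rewrite shear_J by auto. rewrite J_comp by auto. rewrite E1, E2. unfold psi.
    apply injective_projections; simpl; field.
Qed.

Lemma gam_surj be K z : -1 <= be <= 1 -> Cmod z < 1 -> fst (shear_fun be z) = (K + 2*be)/4 ->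
  good be K /\ exists x, gam be K x = z.
Proof.
  intros Hb Hz HK.
  pose proof (one_minus_nz z Hz) as Hm. pose proof (one_plus_nz z Hz) as Hp.
  remember (Complex.Cdiv (Cplus (RtoC 1) z) (Cminus (RtoC 1) z)) as zt eqn:Hzt.
  assert (Hzt0 : zt <> RtoC 0).
  { intro E. apply Hp. transitivity (Cmult zt (Cminus (RtoC 1) z)). rewrite Hzt. cfield. auto.
    rewrite E. cring. }
  assert (Hzt1 : Cplus zt (RtoC 1) <> RtoC 0).
  { intro E. assert (H2 : Cmult (Cplus zt (RtoC 1)) (Cminus (RtoC 1) z) = RtoC 2).
    { rewrite Hzt. cfield. auto. }
    rewrite E in H2. injection H2. intros. lra. }
  assert (Ez : z = Complex.Cdiv (Cminus zt (RtoC 1)) (Cplus zt (RtoC 1))).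
  { rewrite Hzt. cfield. split; auto.
    replace (Cplus (Cplus (RtoC 1) z) (Cminus (RtoC 1) z)) with (RtoC 2) by cring.
    apply RtoC_nz. lra. }
  destruct z as [x y]. pose proof (mod_lt1 x y Hz) as Hxy.
  assert (Hden : 0 < (1-x)*(1-x) + y*y).
  { destruct (Req_dec y 0). subst. assert (x <> 1). { intro. subst. apply Hm. apply injective_projections; simpl; lra. } nra. nra. }
  assert (HA : fst zt = (1 - x*x - y*y)/((1-x)*(1-x) + y*y)).
  { rewrite Hzt. unfold Complex.Cdiv, Complex.Cinv, Cmult, Cplus, Cminus, Complex.Copp, RtoC. simpl. field. lra. }
  assert (HA0 : 0 < fst zt) by (rewrite HA; apply Rdiv_lt_0_compat; lra).
  set (A := fst zt) in *. set (X := snd zt / A).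
  assert (Ezt : zt = (A, A*X)).
  { apply injective_projections; simpl. reflexivity. unfold X. field. lra. }
  rewrite Ez in HK. rewrite shear_J in HK by auto. rewrite Ezt in HK. rewrite J_comp in HK by auto.
  simpl in HK.
  assert (HK' : (1-be)*A - (1+be)/(1+X*X)/A = K) by lra.
  destruct (af_unique be K X A Hb HA0 HK') as [G HAa].
  split; auto. exists X. unfold gam, zet. rewrite <- HAa. rewrite <- Ezt. symmetry. exact Ez.
Qed.

Lemma Sf_pos be K x : -1 <= be <= 1 -> good be K -> 0 < Sf be K x.
Proof.
  intros Hb [G1 G2]. destruct (Sf_sq be K x Hb) as [H0 H2]. pose proof (x2p1 x) as Hx.
  destruct (Req_dec (Sf be K x) 0) as [E|E]; [|lra]. exfalso. rewrite E in H2.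
  set (w := 4*(1-be*be)/(1+x*x)) in *.
  assert (Hw : 0 <= w) by (apply Rdiv_le_0_compat; nra).
  assert (HKK : K*K = 0) by nra. assert (HK : K = 0) by nra.
  assert (Hw0 : w = 0) by lra.
  assert (Hb2 : 1 - be*be = 0).
  { replace (1 - be*be) with (w * (1+x*x)/4) by (unfold w; field; lra). rewrite Hw0. lra. }
  assert (Hbb : (be-1)*(be+1) = 0) by nra. apply Rmult_integral in Hbb.
  destruct Hbb as [Hbb|Hbb].
  - assert (be = 1) by lra. specialize (G2 H). lra.
  - assert (be = -1) by lra. specialize (G1 H). lra.
Qed.

Lemma Sf_even be K x : Sf be K (-x) = Sf be K x.
Proof. unfold Sf. f_equal. f_equal. f_equal. ring. Qed.

Lemma psi_mono_pos be K x y : -1 <= be <= 1 -> good be K -> 0 <= x -> x < y -> psi be K x < psi be K y.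
Proof.
  intros Hb G Hx Hxy. unfold psi.
  pose proof (Sf_pos be K x Hb G). pose proof (Sf_pos be K y Hb G).
  destruct (Sf_sq be K x Hb) as [_ Ex]. destruct (Sf_sq be K y Hb) as [_ Ey].
  pose proof (x2p1 x). pose proof (x2p1 y).
  assert (Hsq : (x * Sf be K x) * (x * Sf be K x) < (y * Sf be K y) * (y * Sf be K y)).
  { replace ((x * Sf be K x) * (x * Sf be K x)) with (x*x*(Sf be K x * Sf be K x)) by ring.
    replace ((y * Sf be K y) * (y * Sf be K y)) with (y*y*(Sf be K y * Sf be K y)) by ring.
    rewrite Ex, Ey.
    assert (Ht : x*x/(1+x*x) < y*y/(1+y*y)).
    { apply (Rmult_lt_reg_r ((1+x*x)*(1+y*y))). nra. field_simplify; try lra. nra. }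
    replace (x*x*(K*K + 4*(1-be*be)/(1+x*x))) with (K*K*(x*x) + 4*(1-be*be)*(x*x/(1+x*x))) by (field; lra).
    replace (y*y*(K*K + 4*(1-be*be)/(1+y*y))) with (K*K*(y*y) + 4*(1-be*be)*(y*y/(1+y*y))) by (field; lra).
    destruct G as [G1 G2].
    destruct (Req_dec K 0) as [->|HK].
    - assert (be <> 1) by (intro; subst; specialize (G2 eq_refl); lra).
      assert (be <> -1) by (intro; subst; specialize (G1 eq_refl); lra).
      assert (0 < 1 - be*be) by nra.
      assert (4*(1-be*be)*(x*x/(1+x*x)) < 4*(1-be*be)*(y*y/(1+y*y))) by (apply Rmult_lt_compat_l; lra). lra.
    - assert (0 < K*K) by nra. assert (0 <= 1 - be*be) by nra.
      assert (x*x < y*y) by nra.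
      assert (K*K*(x*x) < K*K*(y*y)) by (apply Rmult_lt_compat_l; lra).
      assert (4*(1-be*be)*(x*x/(1+x*x)) <= 4*(1-be*be)*(y*y/(1+y*y))) by (apply Rmult_le_compat_l; lra). lra. }
  assert (0 <= x * Sf be K x) by (apply Rmult_le_pos; lra).
  assert (0 < y * Sf be K y) by (apply Rmult_lt_0_compat; lra).
  destruct (Rlt_or_le (x * Sf be K x) (y * Sf be K y)) as [L|L]. lra.
  exfalso. assert ((y * Sf be K y) * (y * Sf be K y) <= (x * Sf be K x) * (x * Sf be K x)) by (apply Rmult_le_compat; lra). lra.
Qed.

Lemma psi_mono be K x y : -1 <= be <= 1 -> good be K -> x < y -> psi be K x < psi be K y.
Proof.
  intros Hb G Hxy.
  destruct (Rle_or_lt 0 x) as [Hx|Hx]. apply psi_mono_pos; auto.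
  assert (Hn : forall u, psi be K (-u) = - psi be K u).
  { intro u; unfold psi; rewrite Sf_even. field. }
  destruct (Rle_or_lt 0 y) as [Hy|Hy].
  - pose proof (Sf_pos be K x Hb G). pose proof (Sf_pos be K y Hb G). unfold psi. nra.
  - assert (psi be K (-y) < psi be K (-x)) by (apply psi_mono_pos; auto; lra).
    rewrite !Hn in H. lra.
Qed.

Lemma cont_plus (f g : R -> R) x : continuous f x -> continuous g x -> continuous (fun y => f y + g y) x.
Proof. intros. exact (continuous_plus f g x H H0). Qed.
Lemma cont_minus (f g : R -> R) x : continuous f x -> continuous g x -> continuous (fun y => f y - g y) x.
Proof. intros. exact (continuous_minus f g x H H0). Qed.
Lemma cont_mult (f g : R -> R) x : continuous f x -> continuous g x -> continuous (fun y => f y * g y) x.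
Proof. intros. exact (continuous_mult f g x H H0). Qed.
Lemma cont_div (f g : R -> R) x : continuous f x -> continuous g x -> g x <> 0 -> continuous (fun y => f y / g y) x.
Proof. intros. apply (cont_mult f (fun y => / g y)); auto. apply continuous_Rinv_comp; auto. Qed.
Lemma cont_inv (f : R -> R) x : continuous f x -> f x <> 0 -> continuous (fun y => / f y) x.
Proof. intros. apply continuous_Rinv_comp; auto. Qed.
Lemma cont_sqrt (f : R -> R) x : continuous f x -> continuous (fun y => sqrt (f y)) x.
Proof. intros. apply continuous_sqrt_comp; auto. Qed.
Lemma cont_const (c x : R) : continuous (fun _ : R => c) x.
Proof. apply continuous_const. Qed.
Lemma cont_id (x : R) : continuous (fun y : R => y) x.
Proof. apply continuous_id. Qed.

Ltac solve_cont := repeat match goal with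
  | |- continuous (fun y => _ + _) _ => apply cont_plus
  | |- continuous (fun y => _ - _) _ => apply cont_minus
  | |- continuous (fun y => _ * _) _ => apply cont_mult
  | |- continuous (fun y => _ / _) _ => apply cont_div
  | |- continuous (fun y => / _) _ => apply cont_inv
  | |- continuous (fun y => sqrt _) _ => apply cont_sqrt
  | |- continuous (fun y => y) _ => apply cont_id
  | |- continuous (fun y => ?c) _ => apply cont_const
  end.

Lemma cont_eps (f : R -> R) x : continuous f x -> forall eps, 0 < eps -> exists d, 0 < d /\ forall y, Rabs (y - x) < d -> Rabs (f y - f x) < eps.
Proof.
  intros H eps He. destruct (H (ball (f x) eps)) as [d Hd].
  exists (mkposreal _ He). intros y Hy. exact Hy.
  exists d. split. apply cond_pos. intros y Hy. apply (Hd y). exact Hy.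
Qed.

Lemma Sf_cont be K x : -1 <= be <= 1 -> continuous (fun y => Sf be K y) x.
Proof.
  intros Hb. unfold Sf. solve_cont. cbv beta. pose proof (x2p1 x). lra.
Qed.

Lemma af_cont be K x : -1 <= be <= 1 -> good be K -> continuous (fun y => af be K y) x.
Proof.
  intros Hb G. unfold af. destruct (Rlt_dec be 1) as [H|H].
  - apply cont_div. apply cont_plus. apply cont_const. apply Sf_cont; auto. apply cont_const. lra.
  - assert (be = 1) by lra. subst. destruct G as [_ G2]. specialize (G2 eq_refl).
    apply cont_div. apply cont_div. apply cont_const. solve_cont. cbv beta. pose proof (x2p1 x); lra.
    apply cont_minus. apply Sf_cont; auto. apply cont_const.
    destruct (Sf_sq 1 K x Hb) as [H0 _]. lra.
Qed.

Definition gfst (a x : R) := ((a-1)*(a+1) + (a*x)*(a*x)) / ((a+1)*(a+1) + (a*x)*(a*x)).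
Definition gsnd (a x : R) := ((a*x)*(a+1) - (a-1)*(a*x)) / ((a+1)*(a+1) + (a*x)*(a*x)).

Lemma gam_eq be K x : -1 <= be <= 1 -> good be K -> gam be K x = (gfst (af be K x) x, gsnd (af be K x) x).
Proof.
  intros Hb G. destruct (af_prop be K x Hb G) as [Ha _].
  unfold gam, zet, gfst, gsnd. set (a := af be K x) in *.
  unfold Complex.Cdiv, Complex.Cinv, Cminus, Cplus, Cmult, Complex.Copp, RtoC.
  apply injective_projections; simpl; field; nra.
Qed.

Lemma Cmod_le_abs (u : C) : Cmod u <= Rabs (fst u) + Rabs (snd u).
Proof.
  unfold Cmod. rewrite <- (sqrt_square (Rabs (fst u) + Rabs (snd u))).
  2: pose proof (Rabs_pos (fst u)); pose proof (Rabs_pos (snd u)); lra.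
  apply sqrt_le_1_alt. pose proof (Rabs_pos (fst u)); pose proof (Rabs_pos (snd u)).
  assert (fst u ^ 2 = Rabs (fst u) * Rabs (fst u)) by (rewrite <- Rabs_mult; simpl; rewrite Rmult_1_r; symmetry; apply Rabs_right; nra).
  assert (snd u ^ 2 = Rabs (snd u) * Rabs (snd u)) by (rewrite <- Rabs_mult; simpl; rewrite Rmult_1_r; symmetry; apply Rabs_right; nra).
  nra.
Qed.

Lemma gam_cont be K x0 : -1 <= be <= 1 -> good be K -> forall rho, 0 < rho ->
  exists d, 0 < d /\ forall x, Rabs (x - x0) < d -> Cmod (Cminus (gam be K x) (gam be K x0)) < rho.
Proof.
  intros Hb G rho Hr.
  assert (Hden : forall x, (af be K x + 1) * (af be K x + 1) + (af be K x * x) * (af be K x * x) <> 0).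
  { intro x. destruct (af_prop be K x Hb G) as [Ha _]. nra. }
  assert (C1 : continuous (fun x => gfst (af be K x) x) x0).
  { unfold gfst. solve_cont; try apply af_cont; auto. }
  assert (C2 : continuous (fun x => gsnd (af be K x) x) x0).
  { unfold gsnd. solve_cont; try apply af_cont; auto. }
  assert (Hr2 : 0 < rho/2) by lra.
  destruct (cont_eps _ _ C1 _ Hr2) as [d1 [Hd1 K1]].
  destruct (cont_eps _ _ C2 _ Hr2) as [d2 [Hd2 K2]].
  exists (Rmin d1 d2). split. apply Rmin_case; lra.
  intros x Hx. rewrite !gam_eq by auto.
  eapply Rle_lt_trans. apply Cmod_le_abs. simpl.
  specialize (K1 x ltac:(pose proof (Rmin_l d1 d2); lra)).
  specialize (K2 x ltac:(pose proof (Rmin_r d1 d2); lra)).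
  unfold Rminus in K1, K2. lra.
Qed.

Lemma quot_bound (a dz l : C) eps : dz <> RtoC 0 ->
  Cmod (Cminus (Complex.Cdiv a dz) l) < eps -> Cmod (Cminus a (Cmult l dz)) < eps * Cmod dz.
Proof.
  intros Hdz H.
  replace (Cminus (Complex.Cdiv a dz) l) with (Complex.Cdiv (Cminus a (Cmult l dz)) dz) in H by (cfield; auto).
  rewrite Cmod_div in H by auto. apply Cmod_gt_0 in Hdz.
  apply (Rmult_lt_compat_r (Cmod dz)) in H; auto. unfold Rdiv in H.
  rewrite Rmult_assoc, Rinv_l, Rmult_1_r in H; lra.
Qed.

Lemma cderiv_bound F z l eps : is_cderiv F z l -> 0 < eps -> exists r, 0 < r /\
  forall w, Cmod (Cminus w z) < r -> Cmod (Cminus (F w) (Cplus (F z) (Cmult l (Cminus w z)))) <= eps * Cmod (Cminus w z).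
Proof.
  intros H He. destruct (H eps He) as [r [Hr Hw]]. exists r. split; auto.
  intros w Hwz. destruct (classic (w = z)) as [->|Hne].
  - replace (Cminus (F z) (Cplus (F z) (Cmult l (Cminus z z)))) with (RtoC 0) by cring.
    rewrite Cmod_0. apply Rmult_le_pos. lra. apply Cmod_ge_0.
  - assert (Hdz : Cminus w z <> RtoC 0). { intro E. apply Hne. apply injective_projections; injection E; simpl; lra. }
    assert (0 < Cmod (Cminus w z)) by (apply Cmod_gt_0; auto).
    specialize (Hw w). tocq. specialize (Hw (conj H0 Hwz)).
    apply quot_bound in Hw; auto.
    replace (Cminus (F w) (Cplus (F z) (Cmult l (Cminus w z)))) with (Cminus (Cminus (F w) (F z)) (Cmult l (Cminus w z))) by cring.
    lra.
Qed.

Lemma cderiv_cont F z l : is_cderiv F z l -> forall eps, 0 < eps -> exists r, 0 < r /\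
  forall w, Cmod (Cminus w z) < r -> Cmod (Cminus (F w) (F z)) < eps.
Proof.
  intros H eps He. destruct (cderiv_bound F z l 1 H ltac:(lra)) as [r [Hr Hw]].
  pose proof (Cmod_ge_0 l).
  exists (Rmin r (eps / (Cmod l + 1))). split.
  { apply Rmin_case; auto. apply Rdiv_lt_0_compat; lra. }
  intros w Hwz. specialize (Hw w ltac:(pose proof (Rmin_l r (eps / (Cmod l + 1))); lra)).
  assert (Hw2 : Cmod (Cminus w z) < eps / (Cmod l + 1)) by (pose proof (Rmin_r r (eps / (Cmod l + 1))); lra).
  replace (Cminus (F w) (F z)) with (Cplus (Cminus (F w) (Cplus (F z) (Cmult l (Cminus w z)))) (Cmult l (Cminus w z))) by cring.
  eapply Rle_lt_trans. apply Cmod_triangle. rewrite Cmod_mult.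
  pose proof (Cmod_ge_0 (Cminus w z)).
  assert (Cmod (Cminus w z) * (Cmod l + 1) < eps).
  { apply (Rmult_lt_compat_r (Cmod l + 1)) in Hw2; [|lra]. unfold Rdiv in Hw2.
    rewrite Rmult_assoc, Rinv_l, Rmult_1_r in Hw2; lra. }
  nra.
Qed.

Lemma im_le_Cmod' (u : C) : Rabs (snd u) <= Cmod u.
Proof. pose proof (Rmax_Cmod u). pose proof (Rmax_r (Rabs (fst u)) (Rabs (snd u))). lra. Qed.

Lemma Cmod_0v v : Cmod (0, v) = Rabs v.
Proof. unfold Cmod. simpl. rewrite <- sqrt_Rsqr_abs. f_equal. unfold Rsqr. ring. Qed.

Lemma local_mono (F G : Cpx -> Cpx) (ga : R -> C) (ps : R -> R) (c x0 : R) (Fp Gp : C) :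
  is_cderiv F (ga x0) Fp -> is_cderiv G (ga x0) Gp -> Fp <> RtoC 0 -> 0 < fst (Complex.Cdiv Gp Fp) ->
  (forall x, F (ga x) = (c, ps x)) -> (forall x y, x < y -> ps x < ps y) ->
  (forall rho, 0 < rho -> exists d, 0 < d /\ forall x, Rabs (x - x0) < d -> Cmod (Cminus (ga x) (ga x0)) < rho) ->
  exists d, 0 < d /\ forall x, Rabs (x - x0) < d -> x <> x0 ->
    0 < (snd (G (ga x)) - snd (G (ga x0))) * (x - x0).
Proof.
  intros HF HG HFp Hm HFga Hps Hga.
  set (r := Complex.Cdiv Gp Fp) in *. set (m := fst r) in *. set (L := Cmod r). set (nF := Cmod Fp).
  assert (HnF : 0 < nF) by (apply Cmod_gt_0; auto).
  pose proof (Cmod_ge_0 r) as HL. fold L in HL.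
  set (eps := Rmin (nF/2) (m*nF/(4*(L+1)))).
  assert (Heps : 0 < eps).
  { unfold eps. apply Rmin_case. lra. apply Rdiv_lt_0_compat. nra. lra. }
  assert (He1 : eps <= nF/2) by apply Rmin_l.
  assert (He2 : eps <= m*nF/(4*(L+1))) by apply Rmin_r.
  destruct (cderiv_bound F _ _ eps HF Heps) as [rF [HrF KF]].
  destruct (cderiv_bound G _ _ eps HG Heps) as [rG [HrG KG]].
  destruct (Hga (Rmin rF rG) ltac:(apply Rmin_case; auto)) as [d [Hd Kd]].
  exists d. split; auto. intros x Hx Hne.
  specialize (Kd x Hx).
  specialize (KF (ga x) ltac:(pose proof (Rmin_l rF rG); lra)).
  specialize (KG (ga x) ltac:(pose proof (Rmin_r rF rG); lra)).
  set (dz := Cminus (ga x) (ga x0)) in *.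
  set (dp := ps x - ps x0).
  assert (Hdp : 0 < dp * (x - x0)).
  { unfold dp. destruct (Rlt_or_le x x0) as [h|h].
    - specialize (Hps x x0 h). nra.
    - assert (x0 < x) by lra. specialize (Hps x0 x H). nra. }
  set (e2 := Cminus (F (ga x)) (Cplus (F (ga x0)) (Cmult Fp dz))) in *.
  set (e1 := Cminus (G (ga x)) (Cplus (G (ga x0)) (Cmult Gp dz))) in *.
  assert (I1 : ((0, dp) : C) = Cplus (Cmult Fp dz) e2).
  { unfold e2. rewrite !HFga. unfold dp. apply injective_projections; simpl; ring. }
  assert (HGp : Gp = Cmult r Fp) by (unfold r; cfield; auto).
  assert (I2 : Cminus (G (ga x)) (G (ga x0)) = Cplus (Cmult r (0, dp)) (Cminus e1 (Cmult r e2))).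
  { rewrite I1. unfold e1. rewrite HGp. cring. }
  assert (I3 : snd (G (ga x)) - snd (G (ga x0)) = m * dp + snd (Cminus e1 (Cmult r e2))).
  { transitivity (snd (Cminus (G (ga x)) (G (ga x0)))). simpl; ring.
    rewrite I2. unfold m. simpl. ring. }
  rewrite I3.
  set (err := snd (Cminus e1 (Cmult r e2))).
  set (D := Cmod dz). pose proof (Cmod_ge_0 dz) as HD0. fold D in HD0, KF, KG.
  assert (HA : nF * D <= Rabs dp + Cmod e2).
  { rewrite <- Cmod_0v. unfold nF, D. rewrite <- Cmod_mult.
    replace (Cmult Fp dz) with (Cminus (0, dp) e2) by (rewrite I1; cring).
    replace (Cminus (0, dp) e2) with (Cplus (0,dp) (Complex.Copp e2)) by cring.
    eapply Rle_trans. apply Cmod_triangle. rewrite Cmod_opp. lra. }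
  assert (HE : Rabs err <= Cmod e1 + L * Cmod e2).
  { eapply Rle_trans. apply im_le_Cmod'. 
    replace (Cminus e1 (Cmult r e2)) with (Cplus e1 (Complex.Copp (Cmult r e2))) by cring.
    eapply Rle_trans. apply Cmod_triangle. rewrite Cmod_opp, Cmod_mult. unfold L. lra. }
  assert (HDA : nF/2 * D <= Rabs dp) by nra.
  assert (Hc : eps * (L+1) <= m*nF/4).
  { apply (Rmult_le_compat_r (L+1)) in He2; [|lra].
    replace (m * nF / (4 * (L + 1)) * (L + 1)) with (m*nF/4) in He2 by (field; lra). lra. }
  assert (Herr : Rabs err <= m/2 * Rabs dp).
  { assert (Cmod e1 + L * Cmod e2 <= (L+1) * eps * D).
    { assert (L * Cmod e2 <= L * (eps * D)) by (apply Rmult_le_compat_l; lra). nra. }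
    assert ((L+1)*eps*D <= m*nF/4 * D) by (apply Rmult_le_compat_r; lra).
    assert (m*nF/4*D = m/2 * (nF/2*D)) by field.
    assert (m/2 * (nF/2*D) <= m/2 * Rabs dp) by (apply Rmult_le_compat_l; lra).
    lra. }
  destruct (Rlt_or_le x x0) as [h|h].
  - assert (dp < 0) by nra. rewrite (Rabs_left dp) in Herr by auto.
    pose proof (Rle_abs err). nra.
  - assert (x0 < x) by lra. assert (0 < dp) by nra. rewrite (Rabs_right dp) in Herr by lra.
    pose proof (Rle_abs (- err)). rewrite Rabs_Ropp in H1. nra.
Qed.

Lemma re_ratio (a b : C) : a <> RtoC 0 -> Cmod (Complex.Cdiv b a) < 1 ->
  Cplus a b <> RtoC 0 /\ 0 < fst (Complex.Cdiv (Cminus a b) (Cplus a b)).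
Proof.
  intros Ha Hw.
  pose proof (one_plus_nz _ Hw) as Hp.
  assert (Eb : b = Cmult (Complex.Cdiv b a) a) by (cfield; auto).
  set (w := Complex.Cdiv b a) in *.
  assert (Hab : Cplus a b <> RtoC 0).
  { rewrite Eb. replace (Cplus a (Cmult w a)) with (Cmult a (Cplus (RtoC 1) w)) by cring.
    apply Cmult_neq_0; auto. }
  split; auto.
  replace (Complex.Cdiv (Cminus a b) (Cplus a b)) with (Complex.Cdiv (Cminus (RtoC 1) w) (Cplus (RtoC 1) w)).
  2: { rewrite Eb in Hab |- *. cfield; repeat split; auto. }
  destruct w as [u v]. pose proof (mod_lt1 u v Hw) as Huv.
  assert (Hd : 0 < (1+u)*(1+u) + v*v).
  { destruct (Req_dec v 0). subst. assert (u <> -1) by (intro; subst; apply Hp; apply injective_projections; simpl; lra). nra. nra. }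
  unfold Complex.Cdiv, Complex.Cinv, Cmult, Cminus, Cplus, Complex.Copp, RtoC. simpl.
  match goal with |- 0 < ?e => replace e with ((1 - u*u - v*v)/((1+u)*(1+u) + v*v)) by (field; nra) end.
  apply Rdiv_lt_0_compat; lra.
Qed.

Lemma loc_to_glob (q : R -> R) :
  (forall x0, exists d, 0 < d /\ forall x, Rabs (x - x0) < d -> x <> x0 -> 0 < (q x - q x0) * (x - x0)) ->
  forall a b, a < b -> q a < q b.
Proof.
  intros Hloc a b Hab.
  set (S := fun y => a <= y <= b /\ forall y', a < y' <= y -> q a < q y').
  assert (Hb : bound S) by (exists b; intros y [Hy _]; lra).
  assert (Ha : exists y, S y) by (exists a; split; [lra| intros; lra]).
  destruct (completeness S Hb Ha) as [m [Hub Hlub]].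
  assert (Ham : a <= m) by (apply Hub; split; [lra|intros; lra]).
  assert (Hmb : m <= b) by (apply Hlub; intros y [Hy _]; lra).
  assert (Pm_lt : forall y', a < y' < m -> q a < q y').
  { intros y' Hy'. apply NNPP. intro Hn.
    assert (is_upper_bound S y').
    { intros y [Hy1 Hy2]. destruct (Rle_or_lt y y') as [h|h]; auto.
      exfalso. apply Hn. apply Hy2. lra. }
    specialize (Hlub y' H). lra. }
  assert (Pm : forall y', a < y' <= m -> q a < q y').
  { intros y' Hy'. destruct (Req_dec y' m) as [->|h]; [|apply Pm_lt; lra].
    destruct (Hloc m) as [d [Hd Kd]].
    set (y'' := Rmax ((a+m)/2) (m - d/2)).
    assert (H1 : a < y'' < m).
    { unfold y''. apply Rmax_case_strong; intros; lra. }
    assert (H2 : Rabs (y'' - m) < d).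
    { unfold y''. rewrite Rabs_left. pose proof (Rmax_r ((a+m)/2) (m - d/2)). lra.
      apply Rmax_case_strong; intros; lra. }
    specialize (Kd y'' H2 ltac:(lra)). pose proof (Pm_lt y'' H1). nra. }
  destruct (Req_dec m b) as [->|Hmb'].
  - apply Pm. lra.
  - exfalso. destruct (Hloc m) as [d [Hd Kd]].
    set (y1 := Rmin (m + d/2) b).
    assert (Hy1 : m < y1 <= b) by (unfold y1; apply Rmin_case_strong; intros; lra).
    assert (S y1).
    { split. lra. intros y' Hy'. destruct (Rle_or_lt y' m) as [h|h]. apply Pm; lra.
      assert (Rabs (y' - m) < d).
      { rewrite Rabs_right by lra. pose proof (Rmin_l (m + d/2) b). fold y1 in H. lra. }
      specialize (Kd y' H ltac:(lra)).
      destruct (Req_dec m a) as [E|E].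
      - subst. nra.
      - pose proof (Pm m ltac:(lra)). nra. }
    specialize (Hub y1 H). lra.
Qed.

Lemma eps_cont (f : R -> R) x : (forall eps, 0 < eps -> exists d, 0 < d /\ forall y, Rabs (y - x) < d -> Rabs (f y - f x) < eps) -> continuity_pt f x.
Proof.
  intros H eps He. destruct (H eps He) as [d [Hd K]]. exists d. split. lra.
  intros y [_ Hy]. simpl in *. unfold R_dist in *. apply K. auto.
Qed.

Lemma ivt_gen (q : R -> R) : (forall x, continuity_pt q x) -> forall x1 x2 v, x1 <= x2 -> q x1 <= v <= q x2 ->
  exists x, x1 <= x <= x2 /\ q x = v.
Proof.
  intros Hc x1 x2 v H12 Hv.
  destruct (Req_dec (q x1) v) as [E|E]. exists x1. split; [lra|auto].
  destruct (Req_dec (q x2) v) as [E2|E2]. exists x2. split; [lra|auto].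
  assert (x1 < x2) by (destruct (Req_dec x1 x2); [subst; lra|lra]).
  destruct (IVT (fun x => q x - v) x1 x2) as [x [Hx Hq]]; auto.
  - intro y. apply continuity_pt_minus. apply Hc. apply continuity_pt_const. intros a b; auto.
  - lra.
  - lra.
  - exists x. split; auto. lra.
Qed.

Theorem theorem2p7 (alpha1 alpha2 : R) (h1 g1 h2 g2 : Cpx -> Cpx) :
  -1 <= alpha1 <= 1 -> -1 <= alpha2 <= 1 ->
  in_SH h1 g1 -> in_SH h2 g2 ->
  (forall z, inE z -> Cadd (h1 z) (g1 z) = shear_fun alpha1 z) ->
  (forall z, inE z -> Cadd (h2 z) (g2 z) = shear_fun alpha2 z) ->
  has_dilatation h1 g1 (fun z => Copp z) ->
  has_dilatation h2 g2 (fun z => z) ->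
  alpha1 >= alpha2 ->
  forall t : R, 0 <= t <= 1 ->
    let h := fun z => Cadd (Cscal t (h1 z)) (Cscal (1 - t) (h2 z)) in
    let g := fun z => Cadd (Cscal t (g1 z)) (Cscal (1 - t) (g2 z)) in
    in_SH h g /\ convex_imag_dir (image_E (harm h g)).
Proof.
  intros Hal1 Hal2 HS1 HS2 Hsum1 Hsum2 Hd1 Hd2 Hge t Ht h g.
  destruct HS1 as [An1 [Ag1 [_ [_ [H01 Hc01]]]]].
  destruct HS2 as [An2 [Ag2 [_ [_ [H02 Hc02]]]]].
  set (be := t*alpha1 + (1-t)*alpha2).
  assert (Hbe : -1 <= be <= 1) by (unfold be; split; nra).
  set (F := fun w => Cadd (h w) (g w)).
  set (G := fun w => Csub (h w) (g w)).
  assert (Fsh : forall z, inE z -> F z = shear_fun be z).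
  { intros z Hz. unfold F, h, g.
    transitivity (Cplus (Cmult (RtoC t) (Cadd (h1 z) (g1 z))) (Cmult (RtoC (1-t)) (Cadd (h2 z) (g2 z)))).
    { tocq. cring. }
    rewrite Hsum1, Hsum2 by auto. unfold shear_fun, be. tocq.
    pose proof Hz as Hz'. rewrite inE_mod in Hz'.
    pose proof (one_minus_nz z Hz'). pose proof (one_plus_nz z Hz').
    cfield.
    intro E; apply (Cmult_neq_0 _ _ H H0); rewrite <- E; cring. }
  assert (Der : forall z, inE z -> exists a b, is_cderiv h z a /\ is_cderiv g z b /\ a <> RtoC 0 /\ Cmod (Complex.Cdiv b a) < 1).
  { intros z Hz. destruct (An1 z Hz) as [a1 Ha1]. destruct (Ag1 z Hz) as [b1 Hb1].
    destruct (An2 z Hz) as [a2 Ha2]. destruct (Ag2 z Hz) as [b2 Hb2].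
    destruct (deriv_shear_gen alpha1 h1 g1 (fun z => Defs.Copp z) z a1 b1 Hsum1 Hd1 Hz Ha1 Hb1) as [_ [Eb1 Ea1]].
    destruct (deriv_shear_gen alpha2 h2 g2 (fun z => z) z a2 b2 Hsum2 Hd2 Hz Ha2 Hb2) as [_ [Eb2 Ea2]].
    exists (Cplus (Cmult (RtoC t) a1) (Cmult (RtoC (1-t)) a2)).
    exists (Cplus (Cmult (RtoC t) b1) (Cmult (RtoC (1-t)) b2)).
    split. { apply d2cd. apply (isd_lin h1 h2 z a1 a2 t (1-t)); apply cd2d; auto. }
    split. { apply d2cd. apply (isd_lin g1 g2 z b1 b2 t (1-t)); apply cd2d; auto. }
    rewrite Eb1, Eb2. pose proof Hz as Hz'. rewrite inE_mod in Hz'.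
    exact (sense_comb alpha1 alpha2 t z a1 a2 ltac:(lra) ltac:(lra) ltac:(lra) Ht Hz' Ea1 Ea2). }
  assert (DerFG : forall z, inE z -> exists Fp Gp, is_cderiv F z Fp /\ is_cderiv G z Gp /\
            Fp <> RtoC 0 /\ 0 < fst (Complex.Cdiv Gp Fp)).
  { intros z Hz. destruct (Der z Hz) as [a [b [Ha [Hb [Ha0 Hab]]]]].
    destruct (re_ratio a b Ha0 Hab) as [Hs Hr].
    exists (Cplus a b), (Cminus a b). split.
    { apply d2cd. exact (isd_plus h g z a b (cd2d _ _ _ Ha) (cd2d _ _ _ Hb)). }
    split. { apply d2cd. exact (isd_minus h g z a b (cd2d _ _ _ Ha) (cd2d _ _ _ Hb)). }
    auto. }
  assert (Harm : forall z, harm h g z = (fst (F z), snd (G z))).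
  { intro z. apply injective_projections; reflexivity. }
  assert (GamIn : forall K x, good be K -> inE (gam be K x)).
  { intros K x Gd. rewrite inE_mod. apply (gam_props be K x Hbe Gd). }
  assert (FGam : forall K x, good be K -> F (gam be K x) = ((K + 2*be)/4, psi be K x)).
  { intros K x Gd. rewrite Fsh by auto. apply (gam_props be K x Hbe Gd). }
  assert (Qmono : forall K, good be K -> forall x y, x < y -> snd (G (gam be K x)) < snd (G (gam be K y))).
  { intros K Gd. apply loc_to_glob. intro x0.
    destruct (DerFG _ (GamIn K x0 Gd)) as [Fp [Gp [HF [HG [HFp HR]]]]].
    apply (local_mono F G (gam be K) (psi be K) ((K + 2*be)/4) x0 Fp Gp); auto.
    - intros x y. apply psi_mono; auto.
    - apply gam_cont; auto. }
  assert (Qcont : forall K, good be K -> forall x, continuity_pt (fun x => snd (G (gam be K x))) x).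
  { intros K Gd x. apply eps_cont. intros eps He.
    destruct (DerFG _ (GamIn K x Gd)) as [Fp [Gp [HF [HG [HFp HR]]]]].
    destruct (cderiv_cont G _ _ HG eps He) as [r [Hr Kr]].
    destruct (gam_cont be K x Hbe Gd r Hr) as [d [Hd Kd]].
    exists d. split; auto. intros y Hy. specialize (Kr _ (Kd y Hy)).
    eapply Rle_lt_trans; [|exact Kr].
    replace (snd (G (gam be K y)) - snd (G (gam be K x))) with (snd (Cminus (G (gam be K y)) (G (gam be K x)))) by (simpl; ring).
    apply im_le_Cmod'. }
  assert (Lev : forall z1 z, inE z1 -> inE z -> fst (F z) = fst (F z1) ->
     good be (4 * fst (F z1) - 2*be) /\ exists x, gam be (4 * fst (F z1) - 2*be) x = z).
  { intros z1 z Hz1 Hz E. apply gam_surj; auto. apply inE_mod; auto.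
    rewrite <- Fsh by auto. rewrite E. field. }
  split.
  - split; [|split; [|split; [|split; [|split]]]].
    + intros z Hz. destruct (Der z Hz) as [a [b [Ha _]]]. exists a; auto.
    + intros z Hz. destruct (Der z Hz) as [a [b [_ [Hb _]]]]. exists b; auto.
    + intros z w Hz Hw E. rewrite !Harm in E. injection E as E1 E2.
      destruct (Lev z z Hz Hz eq_refl) as [Gd [x1 Hx1]].
      destruct (Lev z w Hz Hw (eq_sym E1)) as [_ [x2 Hx2]].
      set (K := 4 * fst (F z) - 2 * be) in *.
      assert (Eq : snd (G (gam be K x1)) = snd (G (gam be K x2))) by (rewrite Hx1, Hx2; exact E2).
      destruct (Rtotal_order x1 x2) as [L|[L|L]].
      * pose proof (Qmono _ Gd _ _ L). lra.
      * rewrite <- Hx1, <- Hx2, L. reflexivity.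
      * pose proof (Qmono _ Gd _ _ L). lra.
    + intros z a' b' Hz Ha' Hb'. destruct (Der z Hz) as [a [b [Ha [Hb [Ha0 Hab]]]]].
      rewrite (cd_unique _ _ _ _ Ha' Ha), (cd_unique _ _ _ _ Hb' Hb). tocq. auto.
    + unfold harm in *. unfold h, g. tocq. revert H01 H02. unfold Cmult, Cplus, Cconj, RtoC. simpl.
      intros E1 E2. injection E1 as E11 E12. injection E2 as E21 E22.
      apply injective_projections; simpl; nra.
    + replace Defs.C1 with (Cplus (Cmult (RtoC t) Defs.C1) (Cmult (RtoC (1-t)) Defs.C1)).
      apply d2cd. apply (isd_lin h1 h2 Defs.C0 Defs.C1 Defs.C1 t (1-t)); apply cd2d; auto.
      apply injective_projections; simpl; ring.
  - intros w1 w2 [z1 [Hz1 E1]] [z2 [Hz2 E2]] HRe s Hs. subst w1 w2.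
    rewrite !Harm in HRe |- *. unfold Re, Im in *. cbn [fst snd] in HRe |- *.
    destruct (Lev z1 z1 Hz1 Hz1 eq_refl) as [Gd [x1 Hx1]].
    destruct (Lev z1 z2 Hz1 Hz2 (eq_sym HRe)) as [_ [x2 Hx2]].
    set (K := 4 * fst (F z1) - 2 * be) in *.
    set (q := fun x => snd (G (gam be K x))).
    set (v := s * snd (G z1) + (1 - s) * snd (G z2)).
    assert (Hq : exists x, q x = v).
    { destruct (Rle_or_lt x1 x2) as [L|L].
      - assert (q x1 <= q x2).
        { destruct (Req_dec x1 x2) as [->|N]. lra. apply Rlt_le. apply Qmono; auto. lra. }
        assert (q x1 <= v <= q x2).
        { unfold v. unfold q in H. rewrite Hx1, Hx2 in H. unfold q. rewrite Hx1, Hx2. split; nra. }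
        destruct (ivt_gen q (Qcont K Gd) x1 x2 v L H0) as [x [_ Hx]]. eauto.
      - assert (q x2 < q x1) by (apply Qmono; auto).
        assert (q x2 <= v <= q x1).
        { unfold v. unfold q in H. rewrite Hx1, Hx2 in H. unfold q. rewrite Hx1, Hx2. split; nra. }
        destruct (ivt_gen q (Qcont K Gd) x2 x1 v ltac:(lra) H0) as [x [_ Hx]]. eauto. }
    destruct Hq as [x Hx]. exists (gam be K x). split. apply GamIn; auto.
    rewrite Harm. rewrite FGam by auto. unfold q in Hx. rewrite Hx.
    apply injective_projections; cbn [fst snd]; auto. unfold K. field.
Qed.
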